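(* The space $X_\Delta=\mathbb C^d_\Delta/\!/N_{\mathbb C}$ is compact, i.e. every open covering of $X_\Delta$ admits a finite subcovering.
   Context: Let $\mathfrak d$ be an $n$-dimensional real vector space, $\mathfrak d_{\mathbb C}=\mathfrak d\oplus i\mathfrak d$. A quasilattice in $\mathfrak d$ is the $\mathbb Z$-submodule generated by a finite set of vectors spanning $\mathfrak d$. Let $\Delta\subset\mathfrak d^*$ be an $n$-dimensional convex polytope (not necessarily rational or simple) with $d$ facets, $\Delta=\bigcap_{j=1}^d\{\mu:\langle\mu,X_j\rangle\ge\lambda_j\}$, with chosen inward normals $X_1,\dots,X_d\in\mathfrak d$, and $Q$ a quasilattice containing them. For each face $F$, $I_F=\{j:\langle\mu,X_j\rangle=\lambda_j\text{ on }F\}$; $\mathbb C^d_\Delta=\bigcup_F\{z\in\mathbb C^d:z_j\ne0\ \forall j\notin I_F\}$ (all faces). $\pi:\mathbb R^d\to\mathfrak d$, $\pi_{\mathbb C}$, $e_j\mapsto X_j$; $\mathfrak n=\ker\pi$. $T^d_{\mathbb C}=\mathbb C^d/\mathbb Z^d$ acts on $\mathbb C^d$ by $\exp(Z)\cdot z=(e^{2\pi iZ_j}z_j)_j$; $T^d=\mathbb R^d/\mathbb Z^d$; $N=\ker(T^d\to\mathfrak d/Q)$, $N_{\mathbb C}=\ker(T^d_{\mathbb C}\to\mathfrak d_{\mathbb C}/Q)$, $A=\exp(i\mathfrak n)$. $X_\Delta$ is the quotient of $\mathbb C^d_\Delta$ by the equivalence relation $z\sim w\iff N\,\overline{Az}\cap\overline{Aw}\ne\emptyset$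 (closures in $\mathbb C^d_\Delta$), with the quotient topology (not necessarily Hausdorff). *)

(* Defs.v *)
From Stdlib Require Import Reals List Relations ZArith.
From mathcomp Require Import ssreflect ssrfun ssrbool eqtype ssrnat seq fintype bigop.
Set Implicit Arguments. Unset Strict Implicit.

Open Scope R_scope.

(* vectors of R^k (also used for d^* = R^n via the standard pairing) *)
Definition rsum (k : nat) (f : 'I_k -> R) : R := \big[Rplus/0]_(i < k) f i.
Definition dot (k : nat) (u v : 'I_k -> R) : R := rsum (fun i => u i * v i).

Section Poly.
Variables (n d : nat) (X : 'I_d -> 'I_n -> R) (lam : 'I_d -> R).

Definition Delta (mu : 'I_n -> R) : Prop := forall j, dot mu (X j) >= lam j.

(* (nonempty) faces: F = Delta cap {<mu,v> = c} for a supporting hyperplane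
   (v = 0, c = 0 gives Delta itself) *)
Definition is_face (F : ('I_n -> R) -> Prop) : Prop :=
  (exists mu, F mu) /\
  exists (v : 'I_n -> R) (c : R),
    (forall mu, Delta mu -> dot mu v >= c) /\
    (forall mu, F mu <-> (Delta mu /\ dot mu v = c)).

Definition aff_indep (k : nat) (p : 'I_k.+1 -> 'I_n -> R) : Prop :=
  forall c : 'I_k -> R,
    (forall i, rsum (fun l => c l * (p (lift ord0 l) i - p ord0 i)) = 0) ->
    forall l, c l = 0.

Definition dim_ge (S : ('I_n -> R) -> Prop) (k : nat) : Prop :=
  exists p : 'I_k.+1 -> 'I_n -> R, aff_indep p /\ forall i, S (p i).

Definition is_facet (F : ('I_n -> R) -> Prop) : Prop :=
  is_face F /\ (exists mu, Delta mu /\ ~ F mu) /\ dim_ge F n.-1.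

Definition Fj (j : 'I_d) (mu : 'I_n -> R) : Prop := Delta mu /\ dot mu (X j) = lam j.

Definition polytope_data : Prop :=
  (exists M, forall mu, Delta mu -> forall i, Rabs (mu i) <= M) /\
  dim_ge Delta n /\
  (forall j, is_facet (Fj j)) /\
  (forall G, is_facet G -> exists j, forall mu, G mu <-> Fj j mu) /\
  (forall j k, (forall mu, Fj j mu <-> Fj k mu) -> j = k).

Definition IF (F : ('I_n -> R) -> Prop) (j : 'I_d) : Prop :=
  forall mu, F mu -> dot mu (X j) = lam j.

Definition Cpt := 'I_d -> (R * R).   (* z_j = fst (z j) + i snd (z j) *)

Definition cmul (a b : R * R) : R * R :=
  (fst a * fst b - snd a * snd b, fst a * snd b + snd a * fst b).

(* exp(Z) . z for Z = a + i b :  z_j |-> e^{2 pi i Z_j} z_j *)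
Definition expact (a b : 'I_d -> R) (z : Cpt) : Cpt :=
  fun j => cmul (exp (-(2 * PI * b j)) * cos (2 * PI * a j),
                 exp (-(2 * PI * b j)) * sin (2 * PI * a j)) (z j).

Definition zeroR : 'I_d -> R := fun _ => 0.

Definition CdDelta (z : Cpt) : Prop :=
  exists F, is_face F /\ forall j, ~ IF F j -> z j <> (0, 0).

Definition piR (a : 'I_d -> R) : 'I_n -> R := fun i => rsum (fun j => a j * X j i).

(* sup-distance on C^d (induces the standard topology) *)
Definition near (eps : R) (z w : Cpt) : Prop :=
  forall j, Rabs (fst (z j) - fst (w j)) < eps /\ Rabs (snd (z j) - snd (w j)) < eps.

Definition closureD (S : Cpt -> Prop) (p : Cpt) : Prop :=
  CdDelta p /\ forall eps, eps > 0 -> exists s, S s /\ near eps p s.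

Section Quasi.
Variables (m : nat) (Y : 'I_m -> 'I_n -> R).

Definition inQ (v : 'I_n -> R) : Prop :=
  exists k : 'I_m -> Z, forall i, v i = rsum (fun l => IZR (k l) * Y l i).

Definition quasilattice_data : Prop :=
  (forall v : 'I_n -> R, exists c : 'I_m -> R,
      forall i, v i = rsum (fun l => c l * Y l i)) /\
  (forall j, inQ (X j)).

(* A z, with A = exp(i n), n = ker pi *)
Definition orbitA (z w : Cpt) : Prop :=
  exists b : 'I_d -> R, (forall i, piR b i = 0) /\ forall j, w j = expact zeroR b z j.

(* z ~ w  iff  N . cl(Az) meets cl(Aw);  N = { [a] in T^d : pi(a) in Q } *)
Definition simrel (z w : Cpt) : Prop :=
  exists a : 'I_d -> R, inQ (piR a) /\
  exists p, closureD (orbitA z) p /\ closureD (orbitA w) (expact a zeroR p).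

Definition simeq : Cpt -> Cpt -> Prop := clos_refl_sym_trans Cpt simrel.

(* subsets of X_Delta  <->  ~-saturated subsets of C^d_Delta (via preimage);
   open in the quotient topology  <->  preimage open in C^d_Delta *)
Definition saturated (U : Cpt -> Prop) : Prop :=
  forall z w, CdDelta z -> CdDelta w -> simeq z w -> U z -> U w.

Definition openD (U : Cpt -> Prop) : Prop :=
  forall z, CdDelta z -> U z ->
    exists eps, eps > 0 /\ forall w, CdDelta w -> near eps z w -> U w.

Definition XDelta_compact : Prop :=
  forall (I : Type) (U : I -> Cpt -> Prop),
    (forall i, openD (U i) /\ saturated (U i)) ->
    (forall z, CdDelta z -> exists i, U i z) ->
    exists l : list I, forall z, CdDelta z -> exists i, In i l /\ U i z.

End Quasi.
End Poly.

(* Main.v *)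
Require Import Defs.
From Stdlib Require Import Reals.
From mathcomp Require Import ssreflect ssrnat fintype.
From Stdlib Require Import Lra Lia List Classical ClassicalEpsilon FunctionalExtensionality Relations.
From HB Require Import structures.
From mathcomp Require Import ssrfun ssrbool eqtype seq bigop finset.

Module P1.
Open Scope R_scope.

Lemma Rplus_assoc' : associative Rplus. Proof. move=> x y z; lra. Qed.
HB.instance Definition _ := Monoid.isComLaw.Build R 0 Rplus Rplus_assoc' Rplus_comm Rplus_0_l.

Fixpoint Sn (n : nat) (f : nat -> R) : R :=
  match n with O => 0 | S k => Sn k f + f k end.

Lemma Sn_ext n f g : (forall i, (i < n)%nat -> f i = g i) -> Sn n f = Sn n g.
Proof.
elim: n => [|n IH] H //=. rewrite IH ?H //. move=> i Hi; apply: H; exact: ltnW.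
Qed.

Arguments Sn_ext {n f g}.
Lemma Sn_add n f g : Sn n (fun i => f i + g i) = Sn n f + Sn n g.
Proof. elim: n => [|n IH] /=; [lra| rewrite IH; lra]. Qed.

Lemma Sn_scal n c f : Sn n (fun i => c * f i) = c * Sn n f.
Proof. elim: n => [|n IH] /=; [lra| rewrite IH; lra]. Qed.

Lemma Sn_opp n f : Sn n (fun i => - f i) = - Sn n f.
Proof. elim: n => [|n IH] /=; [lra| rewrite IH; lra]. Qed.

Lemma Sn_zero n : Sn n (fun _ => 0) = 0.
Proof. elim: n => [|n IH] /=; [lra| rewrite IH; lra]. Qed.

Lemma Sn_le n f g : (forall i, (i < n)%nat -> f i <= g i) -> Sn n f <= Sn n g.
Proof.
elim: n => [|n IH] H /=; first lra.
have := H n (ltnSn n). have : Sn n f <= Sn n g by apply: IH => i Hi; apply: H; exact: ltnW.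
lra.
Qed.

Lemma Sn_abs n f : Rabs (Sn n f) <= Sn n (fun i => Rabs (f i)).
Proof.
elim: n => [|n IH] /=; first by rewrite Rabs_R0; lra.
apply: Rle_trans (Rabs_triang _ _) _; lra.
Qed.

Lemma rsum_Sn k (f : 'I_k -> R) (g : nat -> R) :
  (forall i : 'I_k, f i = g (nat_of_ord i)) -> rsum f = Sn k g.
Proof.
rewrite /rsum. elim: k f => [|k IH] f H; first by rewrite big_ord0.
rewrite big_ord_recr /=. rewrite (IH (fun i => f (widen_ord (leqnSn k) i))) //.
by rewrite H.
Qed.

Definition ext k (v : 'I_k -> R) : nat -> R :=
  fun i => match @insub nat (fun i => (i < k)%N) _ i with Some j => v j | None => 0 end.

Arguments ext {k}.
Lemma ext_ord k (v : 'I_k -> R) (i : 'I_k) : ext v (nat_of_ord i) = v i.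
Proof. rewrite /ext insubT //= => H. f_equal. by apply: val_inj. Qed.

Lemma Rabs_le_inv x a : Rabs x <= a -> - a <= x <= a.
Proof. rewrite /Rabs; case: Rcase_abs => ? ?; lra. Qed.
Lemma Rabs_lt_inv x a : Rabs x < a -> - a < x < a.
Proof. rewrite /Rabs; case: Rcase_abs => ? ?; lra. Qed.
Lemma Rabs_lt' x a : - a < x < a -> Rabs x < a.
Proof. rewrite /Rabs; case: Rcase_abs => ? ?; lra. Qed.

End P1.
Import P1.

Module P2.
Open Scope R_scope.

Definition row := ((nat -> R) * R)%type.
Definition addrow (r1 r2 : row) : row := (fun i => fst r1 i + fst r2 i, snd r1 + snd r2).
Definition scalrow (c : R) (r : row) : row := (fun i => c * fst r i, c * snd r).

Inductive deriv (rows : list row) : row -> Prop :=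
| dr_in r : List.In r rows -> deriv rows r
| dr_add r1 r2 : deriv rows r1 -> deriv rows r2 -> deriv rows (addrow r1 r2)
| dr_scal c r : 0 <= c -> deriv rows r -> deriv rows (scalrow c r).

Definition feas n (rows : list row) (h : nat -> R) :=
  forall r, List.In r rows -> Sn n (fun i => fst r i * h i) >= snd r.

Lemma deriv_mono (r1 r2 : list row) :
  (forall r, List.In r r2 -> deriv r1 r) -> forall r, deriv r2 r -> deriv r1 r.
Proof.
move=> H r; elim=> [r' Hin|a b _ Ha _ Hb|c r' Hc _ Hr]; [exact: H| exact: dr_add|exact: dr_scal].
Qed.

Lemma deriv_inv (rows : list row) (P : row -> Prop) :
  (forall r, List.In r rows -> P r) ->
  (forall a b, P a -> P b -> P (addrow a b)) ->
  (forall c a, 0 <= c -> P a -> P (scalrow c a)) ->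
  forall r, deriv rows r -> P r.
Proof. move=> H1 H2 H3 r; elim; auto. Qed.

Lemma sep_lists (A B : list R) :
  (forall a b, List.In a A -> List.In b B -> a <= b) ->
  exists x, (forall a, List.In a A -> a <= x) /\ (forall b, List.In b B -> x <= b).
Proof.
elim: A => [|a A IH] H.
- elim: B H => [|b B IHB] H; first by exists 0; split=> ? [].
  have [x [_ Hx]] : exists x, (forall a, List.In a nil -> a <= x) /\ (forall b, List.In b B -> x <= b).
    by apply: IHB => ? ? [].
  exists (Rmin x b); split=> [? []|b' [<-|Hb']]; first exact: Rmin_r.
  apply: Rle_trans (Rmin_l _ _) (Hx _ Hb').
- have [x [Hx1 Hx2]] : exists x, (forall a, List.In a A -> a <= x) /\ (forall b, List.In b B -> x <= b).
    by apply: IH => a' b' Ha Hb; apply: H => //; right.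
  exists (Rmax x a); split.
  + move=> a' [<-|Ha]; [exact: Rmax_r| apply: Rle_trans (Hx1 _ Ha) (Rmax_l _ _)].
  + move=> b Hb. apply: Rmax_lub; [exact: Hx2| apply: H => //; by left].
Qed.

Definition bpos (x : R) : bool := if Rlt_dec 0 x then true else false.
Definition bneg (x : R) : bool := if Rlt_dec x 0 then true else false.
Definition bzer (x : R) : bool := if Req_EM_T x 0 then true else false.

Lemma bposP x : bpos x = true <-> 0 < x.
Proof. rewrite /bpos; case: Rlt_dec => //. Qed.
Lemma bnegP x : bneg x = true <-> x < 0.
Proof. rewrite /bneg; case: Rlt_dec => //. Qed.
Lemma bzerP x : bzer x = true <-> x = 0.
Proof. rewrite /bzer; case: Req_EM_T => //. Qed.

Definition comb n (p r : row) : row :=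
  addrow (scalrow (- fst r n) p) (scalrow (fst p n) r).

Definition elim_rows n (rows : list row) : list row :=
  List.filter (fun r => bzer (fst r n)) rows ++
  List.flat_map (fun p => List.map (fun r => comb n p r)
                   (List.filter (fun r => bneg (fst r n)) rows))
        (List.filter (fun r => bpos (fst r n)) rows).

Lemma elim_rows_in n rows r : List.In r (elim_rows n rows) ->
  (List.In r rows /\ fst r n = 0) \/
  exists p q, List.In p rows /\ List.In q rows /\ 0 < fst p n /\ fst q n < 0 /\ r = comb n p q.
Proof.
rewrite /elim_rows List.in_app_iff List.filter_In bzerP => -[H|H]; first by left.
right. move: H => /List.in_flat_map [p [/List.filter_In [Hp /bposP Hp']]] /List.in_map_iff [q [<- /List.filter_In [Hq /bnegP Hq']]].
by exists p, q.
Qed.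

Lemma mdc a b : a <> 0 -> a * (b / a) = b.
Proof. move=> H; field; exact H. Qed.

Lemma fm n : forall rows, ~ (exists h, feas n rows h) ->
  exists r, deriv rows r /\ (forall i, (i < n)%N -> fst r i = 0) /\ snd r > 0.
Proof.
elim: n => [|n IH] rows Hnf.
- apply: NNPP => Hno; apply: Hnf; exists (fun _ => 0) => r Hr /=.
  apply: Rnot_lt_ge => Hlt; apply: Hno; exists r; split; first exact: dr_in.
  split=> //; by move=> i.
- have Hnew : ~ (exists h, feas n (elim_rows n rows) h).
  { move=> [h Hh]; apply: Hnf.
    pose L (p : row) := (snd p - Sn n (fun i => fst p i * h i)) / fst p n.
    have Hsep : forall a b, List.In a (List.map L (List.filter (fun r => bpos (fst r n)) rows)) -> List.In b (List.map L (List.filter (fun r => bneg (fst r n)) rows)) -> a <= b.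
    {      move=> a b /List.in_map_iff [p [<- /List.filter_In [Hp /bposP Hp']]]
                /List.in_map_iff [q [<- /List.filter_In [Hq /bnegP Hq']]].
      have Hc := Hh (comb n p q).
      have : List.In (comb n p q) (elim_rows n rows).
        rewrite /elim_rows List.in_app_iff; right; apply/List.in_flat_map.
        exists p; split; first by apply/List.filter_In; split=> //; apply/bposP.
        apply/List.in_map_iff; exists q; split=> //. by apply/List.filter_In; split=> //; apply/bnegP.
      move/Hc. rewrite /comb /addrow /scalrow /=.
      rewrite (Sn_ext (g := fun i => (- fst q n) * (fst p i * h i) + fst p n * (fst q i * h i))); last by move=> i _; ring.
      rewrite Sn_add !Sn_scal => Hineq.
      rewrite /L /Rdiv.
      set Sp := Sn n _ in Hineq *. set Sq := Sn n _ in Hineq *.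
      apply: (Rmult_le_reg_l (fst p n)) => //.
      apply: (Rmult_le_reg_l (- fst q n)); first lra.
      have E1 : fst p n * ((snd p - Sp) * / fst p n) = snd p - Sp by field; lra.
      rewrite E1.
      have E2 : - fst q n * (fst p n * ((snd q - Sq) * / fst q n)) = - (fst p n * (snd q - Sq)).
        field. lra.
      rewrite E2. lra. }
    have [x [Hx1 Hx2]] := sep_lists _ _ Hsep.
    exists (fun i => if (i == n)%N then x else h i) => r Hr /=.
      rewrite eqxx.
      rewrite (Sn_ext (g := fun i => fst r i * h i)); last first.
        by move=> i Hi; rewrite (ltn_eqF Hi).
      case: (Rtotal_order (fst r n) 0) => [Hneg|[Hz|Hpos]].
      * have := Hx2 (L r) (List.in_map _ _ _ (proj2 (List.filter_In _ _ _) (conj Hr (proj2 (bnegP _) Hneg)))).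
        rewrite /L => Hle.
        have := Rmult_le_compat_neg_l (fst r n) _ _ (Rlt_le _ _ Hneg) Hle.
        rewrite mdc; [lra|lra].
      * have := Hh r. rewrite /elim_rows List.in_app_iff List.filter_In bzerP => H.
        have := H (or_introl (conj Hr Hz)). rewrite Hz; lra.
      * have := Hx1 (L r) (List.in_map _ _ _ (proj2 (List.filter_In _ _ _) (conj Hr (proj2 (bposP _) Hpos)))).
        rewrite /L => Hle.
        have := Rmult_le_compat_l (fst r n) _ _ (Rlt_le _ _ Hpos) Hle.
        rewrite mdc; [lra|lra].
 }
  have [r [Hd [Hz Hq]]] := IH _ Hnew.
  exists r; split; last split=> //.
  + apply: deriv_mono Hd => r' /elim_rows_in [[Hr _]|[p [q [Hp [Hq' [Hpp [Hqn ->]]]]]]].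
    * exact: dr_in.
    * apply: dr_add; apply: dr_scal; try (by apply: dr_in).
      -- lra.
      -- lra.
  + have Hn : fst r n = 0.
      apply: (deriv_inv _ (fun r => fst r n = 0)) Hd.
      * move=> r' /elim_rows_in [[_ ?]|[p [q [_ [_ [_ [_ ->]]]]]]] //=. ring.
      * move=> a b /= -> ->; ring.
      * move=> c a _ /= ->; ring.
    move=> i; rewrite ltnS leq_eqVlt => /orP [/eqP ->|Hi] //. exact: Hz.
Qed.

End P2.
Import P2.

Module P3.
Open Scope R_scope.

Lemma rsum_ext k (f g : 'I_k -> R) : (forall j, f j = g j) -> rsum f = rsum g.
Proof. move=> H; rewrite /rsum; apply: eq_bigr => j _; exact: H. Qed.
Arguments rsum_ext {k f g}.

Lemma rsum_ext' k (f : 'I_k -> R) : rsum f = Sn k (ext f).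
Proof. apply: rsum_Sn => i; by rewrite ext_ord. Qed.

Lemma rsum_add k (f g : 'I_k -> R) : rsum (fun j => f j + g j) = rsum f + rsum g.
Proof.
rewrite !rsum_ext' -Sn_add; apply: Sn_ext => i Hi.
have -> : i = nat_of_ord (Ordinal Hi) by []. by rewrite !ext_ord.
Qed.

Lemma rsum_scal k c (f : 'I_k -> R) : rsum (fun j => c * f j) = c * rsum f.
Proof.
rewrite !rsum_ext' -Sn_scal; apply: Sn_ext => i Hi.
have -> : i = nat_of_ord (Ordinal Hi) by []. by rewrite !ext_ord.
Qed.

Lemma rsum_zero k : rsum (fun _ : 'I_k => 0) = 0.
Proof. rewrite -[RHS](Rmult_0_l (rsum (fun _ : 'I_k => 0))) -rsum_scal. apply: (@rsum_ext k (fun _ => 0) (fun _ => 0 * 0)) => j; ring. Qed.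

Lemma rsum_le k (f g : 'I_k -> R) : (forall j, f j <= g j) -> rsum f <= rsum g.
Proof.
move=> H; rewrite !rsum_ext'; apply: Sn_le => i Hi.
have -> : i = nat_of_ord (Ordinal Hi) by []. by rewrite !ext_ord.
Qed.

Lemma rsum_ind {k} (j0 : 'I_k) (F : 'I_k -> R) :
  rsum (fun j => if j == j0 then F j else 0) = F j0.
Proof.
rewrite /rsum (bigD1 j0) //= eqxx big1 /=; first lra.
by move=> i /negbTE ->.
Qed.

Lemma dot_Sn n (u v : 'I_n -> R) : dot u v = Sn n (fun i => ext u i * ext v i).
Proof. apply: rsum_Sn => i; by rewrite !ext_ord. Qed.

Lemma dot_sym n (u v : 'I_n -> R) : dot u v = dot v u.
Proof. apply: rsum_ext => i; ring. Qed.

Definition dec (P : Prop) : bool := if excluded_middle_informative P then true else false.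
Lemma decP P : dec P = true <-> P.
Proof. rewrite /dec; case: excluded_middle_informative => //. Qed.

Definition ind k (j0 : 'I_k) : 'I_k -> R := fun j => if j == j0 then 1 else 0.
Arguments ind {k}.

Lemma rsum_ind' k (j0 : 'I_k) (F : 'I_k -> R) : rsum (fun j => ind j0 j * F j) = F j0.
Proof.
rewrite -(rsum_ind j0 F); apply: rsum_ext => j; rewrite /ind; case: (j == j0); ring.
Qed.

Lemma In_mem (T : eqType) (x : T) (s : seq T) : x \in s -> List.In x s.
Proof. elim: s => [|a s IH] //=; rewrite in_cons => /orP [/eqP ->|H]; [by left|right; exact: IH]. Qed.

Lemma In_enum k (j : 'I_k) : List.In j (enum 'I_k).
Proof. apply: In_mem; by rewrite mem_enum. Qed.

Lemma farkas (n d : nat) (X : 'I_d -> 'I_n -> R) (sel1 sel2 : 'I_d -> Prop) (tau : 'I_n -> R) :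
 (exists h : 'I_n -> R, (forall j, sel1 j -> dot h (X j) >= 0) /\
     (forall j, sel2 j -> dot h (X j) <= 0) /\ dot h tau < 0)
 \/ (exists y y' : 'I_d -> R, (forall j, 0 <= y j /\ 0 <= y' j) /\
     (forall j, ~ sel1 j -> y j = 0) /\ (forall j, ~ sel2 j -> y' j = 0) /\
     forall i, tau i = rsum (fun j => (y j - y' j) * X j i)).
Proof.
pose r1 j : list row := if excluded_middle_informative (sel1 j) then (ext (X j), 0) :: nil else nil.
pose r2 j : list row := if excluded_middle_informative (sel2 j) then ((fun i => - ext (X j) i), 0) :: nil else nil.
pose rows : list row := ((fun i => - ext tau i), 1) :: List.flat_map (fun j => r1 j ++ r2 j) (enum 'I_d).
have Hin : forall r, List.In r rows ->
   r = ((fun i => - ext tau i), 1) \/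
   exists j, (sel1 j /\ r = (ext (X j), 0)) \/ (sel2 j /\ r = ((fun i => - ext (X j) i), 0)).
{ move=> r [<-|]; first by left.
  move/List.in_flat_map => [j [_]]; rewrite List.in_app_iff /r1 /r2.
  case: (excluded_middle_informative (sel1 j)) => E1;
  case: (excluded_middle_informative (sel2 j)) => E2 /= H; right; exists j; intuition (subst; auto). }
case: (classic (exists h, feas n rows h)) => [[h Hh]|Hnf].
- left; exists (fun i => h (nat_of_ord i)).
  have Edot : forall v : 'I_n -> R, dot (fun i => h (nat_of_ord i)) v = Sn n (fun i => ext v i * h i).
    move=> v; apply: rsum_Sn => i /=; rewrite ext_ord; ring.
  split; [|split].
  + move=> j Hj. have : List.In (ext (X j), 0) rows.
      right; apply/List.in_flat_map; exists j; split; first exact: In_enum.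
      rewrite /r1; apply/List.in_app_iff; left. case: excluded_middle_informative => //; by left.
    move/Hh => /=. by rewrite Edot.
  + move=> j Hj. have : List.In ((fun i => - ext (X j) i), 0) rows.
      right; apply/List.in_flat_map; exists j; split; first exact: In_enum.
      rewrite /r2; apply/List.in_app_iff; right. case: excluded_middle_informative => //; by left.
    move/Hh => /=. rewrite Edot. rewrite (Sn_ext (g := fun i => - (ext (X j) i * h i))); last by move=> i _; ring.
    rewrite Sn_opp; lra.
  + have : List.In ((fun i => - ext tau i), 1) rows by left.
    move/Hh => /=. rewrite Edot. rewrite (Sn_ext (g := fun i => - (ext tau i * h i))); last by move=> i _; ring.
    rewrite Sn_opp; lra.
- right. have [r [Hd [Hz Hq]]] := fm n rows Hnf.
  pose P (r : row) := exists y y' : 'I_d -> R, exists z, 0 <= z /\ (forall j, 0 <= y j /\ 0 <= y' j) /\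
     (forall j, ~ sel1 j -> y j = 0) /\ (forall j, ~ sel2 j -> y' j = 0) /\ snd r = z /\
     forall i : 'I_n, fst r (nat_of_ord i) = rsum (fun j => (y j - y' j) * X j i) - z * tau i.
  have HP : P r.
  { apply: (deriv_inv _ P) Hd.
    - move=> r' /Hin [->|[j [[Hj ->]|[Hj ->]]]].
      + exists (fun _ => 0), (fun _ => 0), 1; split; first lra.
        split; first (move=> *; split; lra). split=> //. split=> //. split=> // i /=. rewrite ext_ord (rsum_ext (g := fun _ => 0)) ?rsum_zero; first lra. move=> j; ring.
      + exists (ind j), (fun _ => 0), 0; split; first lra; split.
          move=> j'; rewrite /ind; case: (j' == j); lra.
        split. move=> j' Hj'; rewrite /ind; case E: (j' == j) => //. by move/eqP: E Hj' => -> .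
        split=> //; split=> // i /=. rewrite ext_ord (rsum_ext (g := fun j' => ind j j' * X j' i)).
          rewrite rsum_ind'; ring. move=> j'; ring.
      + exists (fun _ => 0), (ind j), 0; split; first lra; split.
          move=> j'; rewrite /ind; case: (j' == j); lra.
        split=> //. split. move=> j' Hj'; rewrite /ind; case E: (j' == j) => //. by move/eqP: E Hj' => -> .
        split=> // i /=. rewrite ext_ord (rsum_ext (g := fun j' => - (ind j j' * X j' i))).
          rewrite (rsum_ext (g := fun j' => (-1) * (ind j j' * X j' i))); last by move=> j'; ring.
          rewrite rsum_scal rsum_ind'; ring. move=> j'; ring.
    - move=> a b [y1 [y1' [z1 [Hz1 [Hy1 [Hs1 [Hs1' [Hq1 Ha1]]]]]]]] [y2 [y2' [z2 [Hz2 [Hy2 [Hs2 [Hs2' [Hq2 Ha2]]]]]]]].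
      exists (fun j => y1 j + y2 j), (fun j => y1' j + y2' j), (z1 + z2).
      split; first lra. split. move=> j; have := Hy1 j; have := Hy2 j; lra.
      split. move=> j Hj; rewrite Hs1 // Hs2 //; lra.
      split. move=> j Hj; rewrite Hs1' // Hs2' //; lra.
      split. by rewrite /= Hq1 Hq2.
      move=> i /=. rewrite Ha1 Ha2.
      have E : rsum (fun j => (y1 j + y2 j - (y1' j + y2' j)) * X j i) =
               rsum (fun j => (y1 j - y1' j) * X j i) + rsum (fun j => (y2 j - y2' j) * X j i).
        rewrite -rsum_add; apply: rsum_ext => j; ring.
      rewrite E; ring.
    - move=> c a Hc [y1 [y1' [z1 [Hz1 [Hy1 [Hs1 [Hs1' [Hq1 Ha1]]]]]]]].
      exists (fun j => c * y1 j), (fun j => c * y1' j), (c * z1).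
      split; first by apply: Rmult_le_pos. split. move=> j; have := Hy1 j; split; apply: Rmult_le_pos; lra.
      split. move=> j Hj; rewrite Hs1 //; lra.
      split. move=> j Hj; rewrite Hs1' //; lra.
      split. by rewrite /= Hq1.
      move=> i /=. rewrite Ha1.
      have E : rsum (fun j => (c * y1 j - c * y1' j) * X j i) = c * rsum (fun j => (y1 j - y1' j) * X j i).
        rewrite -rsum_scal; apply: rsum_ext => j; ring.
      rewrite E; ring. }
  have [y [y' [z [Hz0 [Hy [Hs [Hs' [Hqz Ha]]]]]]]] := HP.
  have Hzpos : 0 < z by rewrite -Hqz; lra.
  exists (fun j => y j / z), (fun j => y' j / z); split.
    move=> j; have := Hy j => -[? ?]; split; apply: Rmult_le_pos => //; left; apply: Rinv_0_lt_compat; lra.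
  split. move=> j Hj; rewrite Hs //; rewrite /Rdiv; ring.
  split. move=> j Hj; rewrite Hs' //; rewrite /Rdiv; ring.
  move=> i. have := Ha i. rewrite Hz ?ltn_ord // => H.
  rewrite (rsum_ext (g := fun j => / z * ((y j - y' j) * X j i))).
    rewrite rsum_scal. field_simplify_eq; lra.
  move=> j; rewrite /Rdiv; ring.
Qed.

End P3.
Import P3.

Module P4.
Open Scope R_scope.

Section HB.
Variables (T : Type) (l : list T) (Hl : forall t, List.In t l).
Variables (I : Type) (K : (T -> R) -> Prop) (U : I -> (T -> R) -> Prop).

Definition nearT (e : R) (p q : T -> R) := forall t, Rabs (p t - q t) < e.

Definition box := ((T -> R) * (T -> R))%type.
Definition inbox (b : box) (p : T -> R) := forall t, fst b t <= p t <= snd b t.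
Definition Good (b : box) := exists L : list I, forall p, K p -> inbox b p -> exists i, List.In i L /\ U i p.
Definition ordb (b : box) := forall t, fst b t <= snd b t.

Definition upd (f : T -> R) (t : T) (v : R) : T -> R :=
  fun s => if excluded_middle_informative (s = t) then v else f s.

Lemma upd_eq f t v : upd f t v t = v.
Proof. rewrite /upd; by case: excluded_middle_informative. Qed.
Lemma upd_neq f t v s : s <> t -> upd f t v s = f s.
Proof. rewrite /upd; by case: excluded_middle_informative. Qed.

Definition bleft (b : box) t : box := (fst b, upd (snd b) t ((fst b t + snd b t) / 2)).
Definition bright (b : box) t : box := (upd (fst b) t ((fst b t + snd b t) / 2), snd b).

Lemma split_bad b t : ~ Good b -> ~ Good (bleft b t) \/ ~ Good (bright b t).
Proof.
move=> Hb; apply: NNPP => H; apply: Hb.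
have [[L1 H1] [L2 H2]] : Good (bleft b t) /\ Good (bright b t).
  split; apply: NNPP => H'; apply: H; [left|right]; exact H'.
exists (L1 ++ L2) => p Kp Bp.
case: (Rle_lt_dec (p t) ((fst b t + snd b t) / 2)) => Hpt.
- have [i [Hi Ui]] : exists i, List.In i L1 /\ U i p.
    apply: H1 => // s; rewrite /bleft /=.
    case: (excluded_middle_informative (s = t)) => [->|Hs].
    + rewrite upd_eq; have := Bp t; lra.
    + rewrite upd_neq //; exact: Bp.
  exists i; split=> //; apply: List.in_or_app; by left.
- have [i [Hi Ui]] : exists i, List.In i L2 /\ U i p.
    apply: H2 => // s; rewrite /bright /=.
    case: (excluded_middle_informative (s = t)) => [->|Hs].
    + rewrite upd_eq; have := Bp t; lra.
    + rewrite upd_neq //; exact: Bp.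
  exists i; split=> //; apply: List.in_or_app; by right.
Qed.

Definition subb (b' b : box) := forall t, fst b t <= fst b' t /\ fst b' t <= snd b' t /\ snd b' t <= snd b t.

Lemma round (ts : list T) : forall b, ~ Good b -> ordb b ->
  exists b', ~ Good b' /\ subb b' b /\
    forall t, List.In t ts -> snd b' t - fst b' t <= (snd b t - fst b t) / 2.
Proof.
elim: ts => [|t ts IH] b Hb Ho.
- exists b; split=> //; split=> // t; have := Ho t; lra.
- have [b1 [Hb1 [Hs1 Hw1]]] : exists b1, ~ Good b1 /\ subb b1 b /\ snd b1 t - fst b1 t <= (snd b t - fst b t) / 2.
  { case: (split_bad b t Hb) => H; [exists (bleft b t)|exists (bright b t)]; split=> //; split.
    - move=> s; rewrite /bleft /=; case: (excluded_middle_informative (s = t)) => [->|Hs].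
      + rewrite upd_eq; have := Ho t; lra.
      + rewrite upd_neq //; have := Ho s; lra.
    - rewrite /bleft /= upd_eq; lra.
    - move=> s; rewrite /bright /=; case: (excluded_middle_informative (s = t)) => [->|Hs].
      + rewrite upd_eq; have := Ho t; lra.
      + rewrite upd_neq //; have := Ho s; lra.
    - rewrite /bright /= upd_eq; lra. }
  have Ho1 : ordb b1 by move=> s; have := Hs1 s; lra.
  have [b2 [Hb2 [Hs2 Hw2]]] := IH b1 Hb1 Ho1.
  exists b2; split=> //; split.
  + move=> s; have := Hs1 s; have := Hs2 s; lra.
  + move=> s [<-|Hs].
    * have := Hs2 t; lra.
    * have := Hw2 s Hs; have := Hs1 s; lra.
Qed.

Lemma pow2_ge n : INR n <= 2 ^ n.
Proof.
elim: n => [|n IH]; first by simpl; lra.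
rewrite S_INR /=. have : 1 <= 2 ^ n by apply: pow_R1_Rle; lra. lra.
Qed.

Lemma small_pow (w e : R) : 0 < e -> exists n, w / 2 ^ n < e.
Proof.
move=> He. have [n Hn] := INR_unbounded (w / e).
exists n. have H2 := pow2_ge n. have Hp : 0 < 2 ^ n by apply: pow_lt; lra.
apply/(Rmult_lt_reg_r (2 ^ n)) => //. rewrite /Rdiv Rmult_assoc Rinv_l; last lra.
rewrite Rmult_1_r.
have : w / e < 2 ^ n by lra.
move=> H. have := Rmult_lt_compat_r e _ _ He H. rewrite /Rdiv Rmult_assoc Rinv_l; lra.
Qed.

Theorem heine_borel (M : R) :
  (forall p, K p -> forall t, Rabs (p t) <= M) ->
  (forall p, (forall e, e > 0 -> exists q, K q /\ nearT e p q) -> K p) ->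
  (forall p, K p -> exists i e, e > 0 /\ forall q, K q -> nearT e p q -> U i q) ->
  exists L : list I, forall p, K p -> exists i, List.In i L /\ U i p.
Proof.
move=> Hbd Hcl Hcov. apply: NNPP => Hno.
pose b0 : box := (fun _ => - Rabs M, fun _ => Rabs M).
have Hb0 : ~ Good b0.
{ move=> [L HL]; apply: Hno; exists L => p Kp; apply: HL => // t /=.
  have := Hbd p Kp t. move/Rabs_le_inv => ?. have := Rle_abs M. lra. }
have Hstep : forall b : box, exists b' : box, (~ Good b /\ ordb b) ->
   ~ Good b' /\ ordb b' /\ subb b' b /\ forall t, snd b' t - fst b' t <= (snd b t - fst b t) / 2.
{ move=> b. case: (classic (~ Good b /\ ordb b)) => [[Hb Ho]|H]; last by exists b.
  have [b' [H1 [H2 H3]]] := round l b Hb Ho.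
  exists b' => _; split=> //; split; first by move=> t; have := H2 t; lra.
  split=> // t; exact: H3 t (Hl t). }
pose step b := proj1_sig (constructive_indefinite_description _ (Hstep b)).
have Hstep' : forall b, ~ Good b -> ordb b -> ~ Good (step b) /\ ordb (step b) /\ subb (step b) b /\
     forall t, snd (step b) t - fst (step b) t <= (snd b t - fst b t) / 2.
  move=> b Hb Ho; rewrite /step; case: constructive_indefinite_description => b' /= H; exact: H.
pose bs := fix bs (k : nat) : box := match k with O => b0 | S k => step (bs k) end.
have Hinv : forall k, ~ Good (bs k) /\ ordb (bs k) /\ forall t, snd (bs k) t - fst (bs k) t <= 2 * Rabs M / 2 ^ k.
{ elim=> [|k [Hk [Ok Wk]]].
  - split=> //; split. move=> t /=; have := Rabs_pos M; lra. move=> t /=; lra.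
  - have [H1 [H2 [H3 H4]]] := Hstep' _ Hk Ok. split=> //; split=> // t /=.
    have := H4 t; have := Wk t. have Hp : 0 < 2 ^ k by apply: pow_lt; lra.
    rewrite /Rdiv Rinv_mult. move=> ? ?. 
    have : (snd (bs k) t - fst (bs k) t) * / 2 <= 2 * Rabs M * / 2 ^ k * / 2.
      apply: Rmult_le_compat_r; lra.
    lra. }
have Hsub : forall k t, fst (bs k) t <= fst (bs (S k)) t /\ snd (bs (S k)) t <= snd (bs k) t.
  move=> k t; have [Hk [Ok _]] := Hinv k; have [_ [_ [H3 _]]] := Hstep' _ Hk Ok.
  have := H3 t; simpl; lra.
have Hnest : forall k m, Peano.le k m -> forall t, fst (bs k) t <= fst (bs m) t /\ snd (bs m) t <= snd (bs k) t.
  move=> k m Hkm t; elim: Hkm => [|m' _ [IH1 IH2]]; first lra.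
  have := Hsub m' t; lra.
have Hlohi : forall k m t, fst (bs k) t <= snd (bs m) t.
  move=> k m t. have [Ok _] := proj2 (Hinv (max k m)).
  have := Ok t. have := Hnest k (max k m) ltac:(lia) t. have := Hnest m (max k m) ltac:(lia) t. lra.
have Hlim : forall t, { x | Un_cv (fun k => fst (bs k) t) x }.
  move=> t; apply: growing_cv. move=> k; exact: (proj1 (Hsub k t)).
  exists (snd (bs O) t) => x [k ->]; exact: Hlohi.
pose p t := proj1_sig (Hlim t).
have Hp : forall k t, fst (bs k) t <= p t <= snd (bs k) t.
{ move=> k t; rewrite /p; case: (Hlim t) => x Hx /=; split.
  - apply: (growing_ineq (fun k => fst (bs k) t) x _ Hx k). move=> k'; exact: (proj1 (Hsub k' t)).
  - have Hc : Un_cv (fun _ => snd (bs k) t) (snd (bs k) t).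
      move=> e He; exists O => m _; rewrite /R_dist Rminus_diag Rabs_R0; lra.
    refine (Rle_cv_lim _ Hx Hc). move=> m; exact: Hlohi. }
have Hclose : forall k q, inbox (bs k) q -> forall t, Rabs (p t - q t) <= 2 * Rabs M / 2 ^ k.
  move=> k q Hq t. have := Hq t; have := Hp k t; have := proj2 (proj2 (Hinv k)) t.
  move=> ? ? ?; apply: Rabs_le; lra.
have Hne : forall k, exists q, K q /\ inbox (bs k) q.
  move=> k; apply: NNPP => H; apply: (proj1 (Hinv k)); exists nil => q Kq Bq; exfalso; apply: H; by exists q.
have Kp : K p.
{ apply: Hcl => e He. have [k Hk] := small_pow (2 * Rabs M) e He.
  have [q [Kq Bq]] := Hne k. exists q; split=> // t. have := Hclose k q Bq t; lra. }
have [i [e [He Hi]]] := Hcov p Kp.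
have [k Hk] := small_pow (2 * Rabs M) e He.
apply: (proj1 (Hinv k)); exists (i :: nil) => q Kq Bq; exists i; split; first by left.
apply: Hi => // t. have := Hclose k q Bq t; lra.
Qed.
End HB.
Arguments nearT {T}.
Arguments heine_borel {T} l Hl {I} K U M.

End P4.
Import P4.

Module P5.
Open Scope R_scope.

Lemma dot_lin n (u h v : 'I_n -> R) (e : R) :
  dot (fun i => u i + e * h i) v = dot u v + e * dot h v.
Proof.
rewrite /dot -rsum_scal -rsum_add; apply: rsum_ext => i; ring.
Qed.

Lemma dot_diff_bound n (u w tau : 'I_n -> R) (e : R) :
  (forall i, Rabs (u i - w i) < e) ->
  dot u tau - dot w tau <= e * rsum (fun i => Rabs (tau i)).
Proof.
move=> H. rewrite /dot -rsum_scal.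
have -> : rsum (fun i => u i * tau i) - rsum (fun i => w i * tau i) =
          rsum (fun i => (u i - w i) * tau i).
  have E : rsum (fun i => u i * tau i) = rsum (fun i => (u i - w i) * tau i) + rsum (fun i => w i * tau i).
    rewrite -rsum_add; apply: rsum_ext => i; ring.
  rewrite E; ring.
apply: rsum_le => i.
apply: Rle_trans (Rle_abs _) _. rewrite Rabs_mult.
apply: Rmult_le_compat_r; first exact: Rabs_pos.
by left.
Qed.

Lemma min_in_list (A : Type) (P : A -> Prop) (f : A -> R) (L : list A) :
  (exists q, List.In q L /\ P q) ->
  exists qm, List.In qm L /\ P qm /\ forall q, List.In q L -> P q -> f qm <= f q.
Proof.
elim: L => [|a L IH] [q [Hq Pq]] //.
case: (classic (exists q, List.In q L /\ P q)) => [Hex|Hnex].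
- have [qm [H1 [H2 H3]]] := IH Hex.
  case: (classic (P a /\ f a < f qm)) => [[Pa Ha]|Hna].
  + exists a; split; first by left. split=> // q' [<-|Hq'] Pq'; first lra.
    have := H3 q' Hq' Pq'; lra.
  + exists qm; split; first by right. split=> // q' [<-|Hq'] Pq'; last exact: H3.
    apply: Rnot_lt_le => Hlt; apply: Hna; split=> //.
- have Pa : P a. case: Hq => [->|Hq] //. exfalso; apply: Hnex; by exists q.
  exists a; split; first by left. split=> // q' [<-|Hq'] Pq'; first lra.
  exfalso; apply: Hnex; by exists q'.
Qed.

Lemma extreme_value n (P : ('I_n -> R) -> Prop) (tau : 'I_n -> R) (M : R) :
  (forall p, P p -> forall t, Rabs (p t) <= M) ->
  (forall p, (forall e, e > 0 -> exists q, P q /\ nearT e p q) -> P p) ->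
  (exists mu0, P mu0) ->
  exists mu, P mu /\ forall nu, P nu -> dot mu tau <= dot nu tau.
Proof.
move=> Hbd Hcl [mu0 Hmu0]. apply: NNPP => Hno.
have Hlow : forall mu, P mu -> exists q, P q /\ dot q tau < dot mu tau.
  move=> mu Pmu; apply: NNPP => H; apply: Hno; exists mu; split=> // nu Pnu.
  apply: Rnot_lt_le => Hlt; apply: H; by exists nu.
pose C := rsum (fun i => Rabs (tau i)).
have HC : 0 <= C. rewrite /C -(rsum_zero n); apply: rsum_le => i; exact: Rabs_pos.
have Hcov : forall mu, P mu -> exists q e, e > 0 /\ forall nu, P nu -> nearT e mu nu -> P q /\ dot q tau < dot nu tau.
{ move=> mu Pmu. have [q [Pq Hq]] := Hlow mu Pmu.
  exists q, ((dot mu tau - dot q tau) / (1 + C)); split.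
    apply: Rdiv_lt_0_compat; lra.
  move=> nu Pnu Hnear; split=> //.
  have := dot_diff_bound _ mu nu tau _ Hnear. rewrite -/C.
  set e := (_ / _).
  have : e * C < dot mu tau - dot q tau.
    rewrite /e /Rdiv. 
    have -> : (dot mu tau - dot q tau) * / (1 + C) * C = (dot mu tau - dot q tau) * (C / (1 + C)) by rewrite /Rdiv; ring.
    have : C / (1 + C) < 1. apply/(Rmult_lt_reg_r (1 + C)); first lra.
      rewrite /Rdiv Rmult_assoc Rinv_l; lra.
    move=> H1. have : 0 < dot mu tau - dot q tau by lra.
    move=> H2. have := Rmult_lt_compat_l _ _ _ H2 H1. lra.
  lra. }
have [L HL] := heine_borel (enum 'I_n) (@In_enum n) P (fun q mu => P q /\ dot q tau < dot mu tau) M Hbd Hcl Hcov.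
have Hex : exists q, List.In q L /\ P q.
  have [q [Hq [Pq _]]] := HL mu0 Hmu0. by exists q.
have [qm [Hqm1 [Hqm2 Hqm3]]] := min_in_list _ P (fun q => dot q tau) L Hex.
have [q [Hq [Pq Hlt]]] := HL qm Hqm2. have := Hqm3 q Hq Pq. lra.
Qed.

Lemma dot_neg n (p v : 'I_n -> R) : dot p (fun i => - v i) = - dot p v.
Proof.
rewrite /dot. have H := rsum_scal n (-1) (fun i => p i * v i).
have E : rsum (fun i => -1 * (p i * v i)) = rsum (fun i => p i * - v i) by apply: rsum_ext => i; ring.
rewrite -E H; ring.
Qed.

Lemma small_eps d (J : 'I_d -> Prop) (a s : 'I_d -> R) :
  (forall j, ~ J j -> 0 < s j) ->
  exists e, 0 < e /\ forall j, ~ J j -> e * Rabs (a j) < s j.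
Proof.
move=> Hs.
have : forall l0 : list 'I_d, exists e, 0 < e /\ forall j, List.In j l0 -> ~ J j -> e * Rabs (a j) < s j.
{ elim=> [|j l0 [e [He H]]]; first by exists 1; split=> [|? []]; lra.
  case: (classic (J j)) => Hj.
  - exists e; split=> // j' [<-|Hj'] //. exact: H.
  - have Hsj := Hs j Hj. have Ha := Rabs_pos (a j).
    exists (Rmin e (s j / (Rabs (a j) + 1))); split.
      apply: Rmin_pos => //. apply: Rdiv_lt_0_compat; lra.
    move=> j' [<-|Hj'] Hnj.
    + apply: Rle_lt_trans (Rmult_le_compat_r _ _ _ Ha (Rmin_r _ _)) _.
      have -> : s j / (Rabs (a j) + 1) * Rabs (a j) = s j * (Rabs (a j) / (Rabs (a j) + 1)) by rewrite /Rdiv; ring.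
      have : Rabs (a j) / (Rabs (a j) + 1) < 1.
        apply/(Rmult_lt_reg_r (Rabs (a j) + 1)); first lra. rewrite /Rdiv Rmult_assoc Rinv_l; lra.
      move=> H1; have := Rmult_lt_compat_l _ _ _ Hsj H1; lra.
    + apply: Rle_lt_trans (Rmult_le_compat_r _ _ _ (Rabs_pos _) (Rmin_l _ _)) _. exact: H. }
move/(_ (enum 'I_d)) => [e [He H]]; exists e; split=> // j; apply: H; exact: In_enum.
Qed.

Lemma lp_kkt n d (X : 'I_d -> 'I_n -> R) (lam : 'I_d -> R) (Z0 : 'I_d -> Prop) (tau : 'I_n -> R) (M : R) :
  (forall mu, Defs.Delta X lam mu -> forall i, Rabs (mu i) <= M) ->
  (exists mu0, Defs.Delta X lam mu0 /\ forall j, Z0 j -> dot mu0 (X j) = lam j) ->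
  exists mu, (Defs.Delta X lam mu /\ forall j, Z0 j -> dot mu (X j) = lam j) /\
    exists y y' : 'I_d -> R, (forall j, 0 <= y j /\ 0 <= y' j) /\
     (forall j, dot mu (X j) <> lam j -> y j = 0) /\ (forall j, ~ Z0 j -> y' j = 0) /\
     forall i, tau i = rsum (fun j => (y j - y' j) * X j i).
Proof.
move=> Hbd Hne.
pose P mu := Defs.Delta X lam mu /\ forall j, Z0 j -> dot mu (X j) = lam j.
have Hcl : forall p, (forall e, e > 0 -> exists q, P q /\ nearT e p q) -> P p.
{ move=> p Hp.
  have key : forall v : 'I_n -> R, forall c : R, (forall q, P q -> dot q v >= c) -> dot p v >= c.
  { move=> v c Hq. apply: Rnot_lt_ge => Hlt.
    pose C := rsum (fun i => Rabs (v i)).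
    have HC : 0 <= C. rewrite /C -(rsum_zero n); apply: rsum_le => i; exact: Rabs_pos.
    have [q [Pq Hn]] := Hp ((c - dot p v) / (1 + C)) ltac:(apply: Rdiv_lt_0_compat; lra).
    have Hn' : forall i, Rabs (q i - p i) < (c - dot p v) / (1 + C).
      move=> i; rewrite Rabs_minus_sym; exact: Hn.
    have := dot_diff_bound _ q p v _ Hn'. have := Hq q Pq. rewrite -/C.
    have : (c - dot p v) / (1 + C) * C < c - dot p v.
      have -> : (c - dot p v) / (1 + C) * C = (c - dot p v) * (C / (1 + C)) by rewrite /Rdiv; ring.
      have : C / (1 + C) < 1.
        apply/(Rmult_lt_reg_r (1 + C)); first lra. rewrite /Rdiv Rmult_assoc Rinv_l; lra.
      move=> H1. have H2 : 0 < c - dot p v by lra. have := Rmult_lt_compat_l _ _ _ H2 H1. lra.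
    lra. }
  split.
  - move=> j; apply: key => q [Hq _]; exact: Hq.
  - move=> j Hj. have H1 := key (X j) (lam j) (fun q Pq => Rle_ge _ _ (Req_le_sym _ _ (proj2 Pq j Hj))).
    have H2 : dot p (fun i => - X j i) >= - lam j.
      apply: key => q [_ Hq]. rewrite dot_neg Hq //; lra.
    rewrite dot_neg in H2; lra. }
have [mu [Pmu Hmin]] := extreme_value n P tau M (fun p Pp => Hbd p (proj1 Pp)) Hcl Hne.
exists mu; split=> //.
pose J j := dot mu (X j) = lam j.
case: (farkas _ _ X J Z0 tau) => [[h [H1 [H2 H3]]]|[y [y' [Hy [Hs [Hs' Ht]]]]]]; last first.
  by exists y, y'.
exfalso.
have Hslack : forall j, ~ J j -> 0 < dot mu (X j) - lam j.
  move=> j Hj; have := proj1 Pmu j; rewrite /J in Hj; have : dot mu (X j) <> lam j by [].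
  move=> ? ?; lra.
have [e [He He']] := small_eps _ J (fun j => dot h (X j)) _ Hslack.
pose mu' i := mu i + e * h i.
have Pmu' : P mu'.
{ split.
  - move=> j; rewrite /mu' dot_lin.
    case: (classic (J j)) => Hj.
    + have := H1 j Hj; rewrite /J in Hj. have := Rmult_le_pos e (dot h (X j)) ltac:(lra). lra.
    + have := He' j Hj. have := Rle_abs (- dot h (X j)). rewrite Rabs_Ropp.
      move=> Ha Hb. have : e * - dot h (X j) <= e * Rabs (dot h (X j)).
        apply: Rmult_le_compat_l; lra.
      lra.
  - move=> j Hj; rewrite /mu' dot_lin.
    have HJ : J j by apply: (proj2 Pmu).
    have := H2 j Hj; have := H1 j HJ; rewrite /J in HJ. move=> ? ?.
    have -> : dot h (X j) = 0 by lra. rewrite HJ; ring. }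
have := Hmin mu' Pmu'. rewrite /mu' dot_lin. have := Rmult_lt_compat_l e _ _ He H3. lra.
Qed.

End P5.
Import P5.

Module P6.
Open Scope R_scope.

Definition modsq (w : R * R) : R := fst w * fst w + snd w * snd w.

Lemma modsq_nonneg w : 0 <= modsq w.
Proof. rewrite /modsq; have := Rle_0_sqr (fst w); have := Rle_0_sqr (snd w); rewrite /Rsqr; lra. Qed.

Lemma modsq_zero w : w = (0, 0) -> modsq w = 0.
Proof. move=> ->; rewrite /modsq /=; ring. Qed.

Lemma modsq_pos w : w <> (0, 0) -> 0 < modsq w.
Proof.
move=> H; case: (modsq_nonneg w) => // H0; exfalso; apply: H.
move: H0; rewrite /modsq; case: w => a b /= H0.
have Ha : a * a = 0 by have := Rle_0_sqr a; have := Rle_0_sqr b; rewrite /Rsqr; lra.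
have Hb : b * b = 0 by have := Rle_0_sqr a; have := Rle_0_sqr b; rewrite /Rsqr; lra.
have -> : a = 0 by case: (Rmult_integral _ _ Ha).
have -> : b = 0 by case: (Rmult_integral _ _ Hb).
done.
Qed.

Lemma abs_le1 x y : x * x + y * y <= 1 -> Rabs x <= 1.
Proof.
move=> H. apply: Rnot_lt_le => Hx.
have H1 : 1 < Rabs x * Rabs x.
  have := Rmult_lt_compat_l (Rabs x) _ _ ltac:(lra) Hx. lra.
rewrite -Rabs_mult Rabs_pos_eq in H1; last by have := Rle_0_sqr x; rewrite /Rsqr; lra.
have := Rle_0_sqr y; rewrite /Rsqr; lra.
Qed.

Lemma modsq_cont (a : R * R) (dl : R) : 0 < dl -> exists e, 0 < e /\ forall b : R * R,
   Rabs (fst a - fst b) < e -> Rabs (snd a - snd b) < e -> Rabs (modsq a - modsq b) < dl.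
Proof.
move=> Hd. pose C := 2 * Rabs (fst a) + 2 * Rabs (snd a) + 2.
have HC : 0 < C by rewrite /C; have := Rabs_pos (fst a); have := Rabs_pos (snd a); lra.
exists (Rmin 1 (dl / (2 * C))); split. apply: Rmin_pos; [lra| apply: Rdiv_lt_0_compat; lra].
move=> b H1 H2.
set e := Rmin 1 (dl / (2 * C)) in H1 H2.
have He1 : e <= 1 by exact: Rmin_l.
have He2 : e * C <= dl / 2.
  have : e <= dl / (2 * C) by exact: Rmin_r.
  move=> H; have := Rmult_le_compat_r C _ _ (Rlt_le _ _ HC) H.
  have -> : dl / (2 * C) * C = dl / 2 by field; lra.
  done.
have -> : modsq a - modsq b = (fst a - fst b) * (fst a + fst b) + (snd a - snd b) * (snd a + snd b)
  by rewrite /modsq; ring.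
apply: Rle_lt_trans (Rabs_triang _ _) _. rewrite !Rabs_mult.
have Hs1 : Rabs (fst a + fst b) <= 2 * Rabs (fst a) + 1.
  have -> : fst a + fst b = 2 * fst a - (fst a - fst b) by ring.
  apply: Rle_trans (Rabs_triang _ _) _. rewrite Rabs_Ropp Rabs_mult (Rabs_pos_eq 2); lra.
have Hs2 : Rabs (snd a + snd b) <= 2 * Rabs (snd a) + 1.
  have -> : snd a + snd b = 2 * snd a - (snd a - snd b) by ring.
  apply: Rle_trans (Rabs_triang _ _) _. rewrite Rabs_Ropp Rabs_mult (Rabs_pos_eq 2); lra.
have A := Rmult_le_compat _ _ _ _ (Rabs_pos _) (Rabs_pos _) (Rlt_le _ _ H1) Hs1.
have B := Rmult_le_compat _ _ _ _ (Rabs_pos _) (Rabs_pos _) (Rlt_le _ _ H2) Hs2.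
have E : e * C = e * (2 * Rabs (fst a) + 1) + e * (2 * Rabs (snd a) + 1) by rewrite /C; ring.
lra.
Qed.

Lemma rsum_swap a b (f : 'I_a -> 'I_b -> R) :
  rsum (fun i => rsum (fun j => f i j)) = rsum (fun j => rsum (fun i => f i j)).
Proof. rewrite /rsum; exact: exchange_big. Qed.

Lemma rsum_term_le k (f : 'I_k -> R) (j0 : 'I_k) : (forall j, 0 <= f j) -> f j0 <= rsum f.
Proof.
move=> H. rewrite -(rsum_ind j0 f). apply: rsum_le => j; case: (j == j0); [lra| exact: H].
Qed.

Lemma In_enumT (T : finType) (x : T) : List.In x (enum T).
Proof. apply: In_mem; by rewrite mem_enum. Qed.

Lemma expact0 d (b : 'I_d -> R) (z : Cpt d) j :
  expact (@zeroR d) b z j = (exp (- (2 * PI * b j)) * fst (z j), exp (- (2 * PI * b j)) * snd (z j)).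
Proof.
rewrite /expact /cmul /zeroR /= Rmult_0_r cos_0 sin_0. f_equal; ring.
Qed.

Lemma expact00 d (w : Cpt d) : expact (@zeroR d) (@zeroR d) w = w.
Proof.
apply: functional_extensionality => j. rewrite expact0 Rmult_0_r Ropp_0 exp_0 !Rmult_1_l.
by case: (w j).
Qed.

End P6.
Import P6.

Module P7.
Open Scope R_scope.
Set Implicit Arguments. Unset Strict Implicit.

Lemma modsq_lim_le (a : R * R) (c : R) :
  (forall e, 0 < e -> exists b : R * R, Rabs (fst a - fst b) < e /\ Rabs (snd a - snd b) < e /\ modsq b <= c) ->
  modsq a <= c.
Proof.
move=> H; apply: Rnot_lt_le => Hlt.
have [e [He He']] := modsq_cont a (modsq a - c) ltac:(lra).
have [b [H1 [H2 H3]]] := H e He. have := He' b H1 H2. move/Rabs_lt_inv; lra.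
Qed.

Lemma modsq_lim_ge (a : R * R) (c : R) :
  (forall e, 0 < e -> exists b : R * R, Rabs (fst a - fst b) < e /\ Rabs (snd a - snd b) < e /\ c <= modsq b) ->
  c <= modsq a.
Proof.
move=> H; apply: Rnot_lt_le => Hlt.
have [e [He He']] := modsq_cont a (c - modsq a) ltac:(lra).
have [b [H1 [H2 H3]]] := H e He. have := He' b H1 H2. move/Rabs_lt_inv; lra.
Qed.

Definition KS d (S : {set 'I_d}) (w : Cpt d) :=
  (forall j, modsq (w j) <= 1) /\ (forall j, j \notin S -> 1 <= modsq (w j)).

Definition goodS n d (X : 'I_d -> 'I_n -> R) (lam : 'I_d -> R) (S : {set 'I_d}) :=
  exists F, is_face X lam F /\ forall j, j \in S -> IF X lam F j.

Definition uncv d (f : ('I_d * bool) -> R) : Cpt d := fun j => (f (j, true), f (j, false)).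
Definition cv d (w : Cpt d) : ('I_d * bool) -> R := fun t => if t.2 then fst (w t.1) else snd (w t.1).

Lemma uncv_cv d (w : Cpt d) : uncv (cv w) = w.
Proof. apply: functional_extensionality => j; rewrite /uncv /cv /=; by case: (w j). Qed.

Lemma KS_CdDelta n d (X : 'I_d -> 'I_n -> R) lam S w : goodS X lam S -> KS S w -> CdDelta X lam w.
Proof.
move=> [F [HF HS]] [_ Hw]; exists F; split=> // j Hj Hz.
have Hn : j \notin S by apply/negP => /HS.
have := Hw j Hn; rewrite (modsq_zero _ Hz); lra.
Qed.

Lemma KS_cover n d (X : 'I_d -> 'I_n -> R) lam (I : Type) (U : I -> Cpt d -> Prop) (S : {set 'I_d}) :
  (forall i, openD X lam (U i)) -> (forall z, CdDelta X lam z -> exists i, U i z) -> goodS X lam S ->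
  exists L : list I, forall w, KS S w -> exists i, List.In i L /\ U i w.
Proof.
move=> Hop Hcov Hg.
have Hbd : forall f, KS S (uncv f) -> forall t, Rabs (f t) <= 1.
  move=> f [H _] [j b]. have := H j; rewrite /modsq /uncv /=.
  case: b => H'; [exact: abs_le1 H'| apply: (abs_le1 _ (f (j, true))); lra].
have Hcl : forall f, (forall e, e > 0 -> exists g, KS S (uncv g) /\ nearT e f g) -> KS S (uncv f).
  move=> f Hf; split.
  - move=> j; apply: modsq_lim_le => e He; have [g [[Hg1 _] Hn]] := Hf e He.
    exists (uncv g j); split; [exact: Hn|split; [exact: Hn| exact: Hg1]].
  - move=> j Hj; apply: modsq_lim_ge => e He; have [g [[_ Hg2] Hn]] := Hf e He.
    exists (uncv g j); split; [exact: Hn|split; [exact: Hn| exact: Hg2]].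
have Hc : forall f, KS S (uncv f) -> exists i e, e > 0 /\ forall g, KS S (uncv g) -> nearT e f g -> U i (uncv g).
  move=> f Kf. have Cf := KS_CdDelta Hg Kf. have [i Hi] := Hcov _ Cf.
  have [e [He He']] := Hop i _ Cf Hi. exists i, e; split=> // g Kg Hn.
  apply: He' (KS_CdDelta Hg Kg) _ => j; split; [exact: Hn| exact: Hn].
have [L HL] := heine_borel _ (@In_enumT (prod 'I_d bool)) (fun f => KS S (uncv f)) (fun i f => U i (uncv f)) 1 Hbd Hcl Hc.
exists L => w Kw. rewrite -(uncv_cv w) in Kw *. exact: HL.
Qed.

End P7.
Import P7.

Module P8.
Open Scope R_scope.
Set Implicit Arguments. Unset Strict Implicit.

Definition cJ d (J : 'I_d -> Prop) (j : 'I_d) : R := if excluded_middle_informative (J j) then 1 else 0.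

Lemma dot_comb n d (X : 'I_d -> 'I_n -> R) (c : 'I_d -> R) (mu : 'I_n -> R) :
  dot mu (fun i => rsum (fun j => c j * X j i)) = rsum (fun j => c j * dot mu (X j)).
Proof.
rewrite /dot.
have E1 : rsum (fun i => mu i * rsum (fun j => c j * X j i)) = rsum (fun i => rsum (fun j => c j * (mu i * X j i))).
  apply: rsum_ext => i; rewrite -rsum_scal; apply: rsum_ext => j; ring.
rewrite E1 rsum_swap; apply: rsum_ext => j; by rewrite rsum_scal.
Qed.

Lemma face_of n d (X : 'I_d -> 'I_n -> R) lam (J : 'I_d -> Prop) (mu0 : 'I_n -> R) :
  Defs.Delta X lam mu0 -> (forall j, J j -> dot mu0 (X j) = lam j) ->
  is_face X lam (fun mu => Defs.Delta X lam mu /\ forall j, J j -> dot mu (X j) = lam j).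
Proof.
move=> H0 H0J; split; first by exists mu0.
exists (fun i => rsum (fun j => cJ J j * X j i)), (rsum (fun j => cJ J j * lam j)).
have Key : forall mu, dot mu (fun i => rsum (fun j => cJ J j * X j i)) - rsum (fun j => cJ J j * lam j)
   = rsum (fun j => cJ J j * (dot mu (X j) - lam j)).
  move=> mu; rewrite dot_comb.
  have E : rsum (fun j => cJ J j * dot mu (X j)) = rsum (fun j => cJ J j * (dot mu (X j) - lam j)) + rsum (fun j => cJ J j * lam j).
    rewrite -rsum_add; apply: rsum_ext => j; ring.
  rewrite E; ring.
have Hnn : forall mu, Defs.Delta X lam mu -> forall j, 0 <= cJ J j * (dot mu (X j) - lam j).
  move=> mu Hmu j; rewrite /cJ; case: excluded_middle_informative => Hjj /=; last lra.
  have := Hmu j; lra.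
split.
- move=> mu Hmu. have := Key mu. have : 0 <= rsum (fun j => cJ J j * (dot mu (X j) - lam j)).
    rewrite -(rsum_zero d); apply: rsum_le => j; exact: Hnn.
  lra.
- move=> mu; split.
  + move=> [Hmu HJ]; split=> //. have := Key mu.
    have -> : rsum (fun j => cJ J j * (dot mu (X j) - lam j)) = 0.
      rewrite -(rsum_zero d); apply: rsum_ext => j; rewrite /cJ; case: excluded_middle_informative => Hj /=; last ring.
      rewrite HJ //; ring.
    lra.
  + move=> [Hmu Heq]; split=> // j Hj.
    have Hs : rsum (fun j => cJ J j * (dot mu (X j) - lam j)) = 0 by have := Key mu; lra.
    have := rsum_term_le _ _ j (Hnn mu Hmu). rewrite Hs /cJ; case: excluded_middle_informative => // Hjj /=.
    have := Hmu j; lra.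
Qed.

Lemma modsq_scale (E : R) (a : R * R) : modsq (E * fst a, E * snd a) = E * E * modsq a.
Proof. rewrite /modsq /=; ring. Qed.

Lemma core n d (X : 'I_d -> 'I_n -> R) lam (M : R) (z : Cpt d) :
  (forall mu, Defs.Delta X lam mu -> forall i, Rabs (mu i) <= M) ->
  CdDelta X lam z ->
  exists S w, goodS X lam S /\ KS S w /\
     exists b, (forall i, piR X b i = 0) /\ forall j, w j = expact (@zeroR d) b z j.
Proof.
move=> Hbd [F0 [HF0 Hnz]].
pose Z0 j := z j = (0, 0).
have HZ0 : forall j, Z0 j -> IF X lam F0 j.
  move=> j Hj; apply: NNPP => H; exact: Hnz j H Hj.
have [[mu0 Hmu0] [v0 [c0 [_ Hiff]]]] := HF0.
have Hne : exists mu0, Defs.Delta X lam mu0 /\ forall j, Z0 j -> dot mu0 (X j) = lam j.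
  exists mu0; split; first exact: (proj1 (proj1 (Hiff mu0) Hmu0)).
  move=> j Hj; exact: HZ0 j Hj mu0 Hmu0.
pose v j := if excluded_middle_informative (Z0 j) then 0 else ln (modsq (z j)) / (4 * PI).
pose tau i := - rsum (fun j => v j * X j i).
have [mu [[Dmu HZmu] [y [y' [Hy [Hs [Hs' Ht]]]]]]] := lp_kkt _ _ X lam Z0 tau M Hbd Hne.
pose J j := dot mu (X j) = lam j.
pose S := [set j | dec (J j)].
have HS : forall j, j \in S <-> J j.
  move=> j; rewrite /S inE; exact (P3.decP (J j)).
pose b j := v j + y j - y' j.
exists S, (expact (@zeroR d) b z).
have Hmod : forall j, ~ Z0 j -> modsq (expact (@zeroR d) b z j) = exp (- (4 * PI * y j)).
{ move=> j Hj. rewrite expact0 modsq_scale.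
  have Hpos : 0 < modsq (z j) by apply: modsq_pos.
  have Ey' : y' j = 0 by apply: Hs'.
  rewrite -exp_plus /b Ey' /v; case: excluded_middle_informative => // Hjz /=.
  have -> : - (2 * PI * (ln (modsq (z j)) / (4 * PI) + y j - 0)) + - (2 * PI * (ln (modsq (z j)) / (4 * PI) + y j - 0))
          = - (4 * PI * y j) + - ln (modsq (z j)).
    field. have := PI_RGT_0; lra.
  rewrite exp_plus (exp_Ropp (ln _)) exp_ln //. field; lra. }
have Hle1 : forall j, exp (- (4 * PI * y j)) <= 1.
  move=> j; rewrite -exp_0. have := PI_RGT_0; have := proj1 (Hy j) => ? ?.
  have : 0 <= 4 * PI * y j by apply: Rmult_le_pos; lra.
  case=> H. left; apply: exp_increasing; lra. rewrite -H Ropp_0; lra.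
have HZJ : forall j, Z0 j -> J j by move=> j Hj; exact: HZmu j Hj.
split; last split; last first.
- exists b; split=> // i. rewrite /piR.
  have E : rsum (fun j => b j * X j i) = rsum (fun j => v j * X j i) + rsum (fun j => (y j - y' j) * X j i).
    rewrite -rsum_add; apply: rsum_ext => j; rewrite /b; ring.
  rewrite E -Ht /tau; ring.
- split.
  + move=> j. case: (classic (Z0 j)) => Hj.
    * rewrite expact0 modsq_scale. rewrite /Z0 in Hj; rewrite Hj /modsq /=; lra.
    * rewrite Hmod //; exact: Hle1.
  + move=> j Hj. have HnJ : ~ J j by move=> H; move: Hj; rewrite (proj2 (HS j) H).
    have HnZ : ~ Z0 j by move=> H; exact: HnJ (HZJ j H).
    rewrite Hmod // (Hs j HnJ) Rmult_0_r Ropp_0 exp_0; lra.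
- exists (fun mu' => Defs.Delta X lam mu' /\ forall j, J j -> dot mu' (X j) = lam j); split.
  + apply: face_of Dmu _ => j Hj; exact: Hj.
  + move=> j Hj mu' [_ H]; apply: H; exact: (proj1 (HS j) Hj).
Qed.

End P8.
Import P8.

Module P9.
Open Scope R_scope.
Set Implicit Arguments. Unset Strict Implicit.

Lemma rsum_eq0 k (f : 'I_k -> R) : (forall j, f j = 0) -> rsum f = 0.
Proof. move=> H; rewrite -(rsum_zero k); exact: (@rsum_ext k f (fun _ => 0) H). Qed.

Lemma simrel_orbit n d (X : 'I_d -> 'I_n -> R) lam m (Y : 'I_m -> 'I_n -> R) (z w : Cpt d) :
  CdDelta X lam w -> orbitA X z w -> simrel X lam Y z w.
Proof.
move=> Cw Oz. exists (@zeroR d); split.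
  exists (fun _ => 0%Z) => i. rewrite /piR.
  rewrite rsum_eq0; last by move=> j; rewrite /zeroR; ring.
  rewrite rsum_eq0 //; move=> l; ring.
exists w; split.
- split=> // e He; exists w; split=> // j; split; rewrite Rminus_diag Rabs_R0; lra.
- rewrite expact00; split=> // e He; exists w; split.
  + exists (@zeroR d); split.
      move=> i; rewrite /piR rsum_eq0 //; move=> j; rewrite /zeroR; ring.
    move=> j; by rewrite expact00.
  + move=> j; split; rewrite Rminus_diag Rabs_R0; lra.
Qed.

Theorem main (n d : nat) (X : 'I_d -> 'I_n -> R) (lam : 'I_d -> R)
  (m : nat) (Y : 'I_m -> 'I_n -> R) :
  polytope_data X lam ->
  quasilattice_data X Y ->
  XDelta_compact X lam Y.
Proof.
move=> [[M HM] _] _ I U Hos Hcov.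
have Hall : forall ss : list {set 'I_d}, exists L : list I, forall S, List.In S ss -> goodS X lam S ->
    forall w, KS S w -> exists i, List.In i L /\ U i w.
{ elim=> [|S ss [L1 H1]]; first by exists nil.
  case: (classic (goodS X lam S)) => Hg.
  - have [L2 H2] := KS_cover (fun i => proj1 (Hos i)) Hcov Hg.
    exists (L2 ++ L1) => S' [<-|HS'] Hg' w Kw.
    + have [i [Hi Ui]] := H2 w Kw. exists i; split=> //; apply: List.in_or_app; by left.
    + have [i [Hi Ui]] := H1 S' HS' Hg' w Kw. exists i; split=> //; apply: List.in_or_app; by right.
  - exists L1 => S' [<-|HS'] Hg' w Kw; [exfalso; exact: Hg Hg'| exact: (H1 S' HS' Hg' w Kw)]. }
have [L HL] := Hall (enum {set 'I_d}).
exists L => z Cz.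
have [S [w [Hg [Kw Ow]]]] := core HM Cz.
have [i [Hi Ui]] := HL S (In_enumT _ S) Hg w Kw.
exists i; split=> //.
have Cw := KS_CdDelta Hg Kw.
apply: ((proj2 (Hos i)) w z Cw Cz _ Ui).
apply: rst_sym; apply: rst_step. exact: simrel_orbit.
Qed.

End P9.
Import P9.


Theorem mainTheorem15 (n d : nat) (X : 'I_d -> 'I_n -> R) (lam : 'I_d -> R)
  (m : nat) (Y : 'I_m -> 'I_n -> R) :
  polytope_data X lam ->
  quasilattice_data X Y ->
  XDelta_compact X lam Y.
Proof.
exact: P9.main.
Qed.
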